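(* Let $(A,A^* )$ be a left-symmetric bialgebroid, let $(A\oplus A^*,\star,\rho,(\cdot,\cdot)_-)$ be the associated pre-symplectic algebroid (with $\star$, $\rho$, $(\cdot,\cdot)_-$ as below), let $H\in\Gamma(A\otimes A)$, $H^\sharp:A^*\to A$ given by $\langle H^\sharp\xi,\eta\rangle=H(\xi,\eta)$, and let $G_H=\{H^\sharp(\xi)+\xi:\xi\in A^*\}$ be its graph. Then $G_H$ is a Dirac structure of $(A\oplus A^*,\star,\rho,(\cdot,\cdot)_-)$ if and only if $H\in\Gamma(\mathrm{Sym}^2(A))$ and $$\delta_*H-\llbracket H,H\rrbracket=0,$$ where $H\in\Gamma(A\otimes A)$ is regarded as a 2-cochain of the left-symmetric algebroid $A^*$.
   Context: A left-symmetric algebroid is a vector bundle $A\to M$ with an $\mathbb R$-bilinear multiplication $\cdot_A$ on $\Gamma(A)$ with $x\cdot_A(y\cdot_Az)-(x\cdot_Ay)\cdot_Az$ symmetric in $x,y$, and an anchor $a_A$ with $x\cdot_A(fy)=f(x\cdot_Ay)+a_A(x)(f)y$, $(fx)\cdot_Ay=f(x\cdot_Ay)$; $[x,y]_A=x\cdot_Ay-y\cdot_Ax$; $d$ the differential of $(A,[\cdot,\cdot]_A,a_A)$; $\langle\mathcal L_x\xi,y\rangle=a_A(x)\langle\xi,y\rangle-\langle\xi,[x,y]_A\rangle$, $\langle R_x\xi,y\rangle=-\langle\xi,y\cdot_Ax\rangle$; analogous $[\cdot,\cdot]_{A^*}$, $d_*$ ($\langle d_*f,\xi\rangle=a_{A^*}(\xi)f$),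 $\mathcal L_\xi x$, $\langle R_\xi x,\eta\rangle=-\langle x,\eta\cdot_{A^*}\xi\rangle$ for $A^*$. Coboundary of $A$: $C^{n+1}(A)=\Gamma(\wedge^nA^*\otimes A^* )$, $\delta\varphi(x_1,\dots,x_{n+1})=\sum_{i=1}^n(-1)^{i+1}a_A(x_i)\varphi(\dots,\hat{x_i},\dots,x_{n+1})-\sum_{i=1}^n(-1)^{i+1}\varphi(\dots,\hat{x_i},\dots,x_n,x_i\cdot_Ax_{n+1})+\sum_{i<j\le n}(-1)^{i+j}\varphi([x_i,x_j]_A,\dots,\hat{x_i},\dots,\hat{x_j},\dots,x_{n+1})$; $\delta_*$ is the same for $A^*$ (acting on $\Gamma(\wedge^nA\otimes A)$). $\mathfrak L_x(y_1\otimes y_2)=(x\cdot_Ay_1)\otimes y_2+y_1\otimes[x,y_2]_A$, similarly $\mathfrak L_\xi$. $(A,A^* )$ is a left-symmetric bialgebroid if $\delta[\xi,\eta]_{A^*}=\mathfrak L_\xi\delta\eta-\mathfrak L_\eta\delta\xi$ and $\delta_*[x,y]_A=\mathfrak L_x\delta_*y-\mathfrak L_y\delta_*x$. The associated structure on $A\oplus A^*$: $e_1\star e_2=(x_1\cdot_Ax_2+\mathcal L_{\xi_1}x_2-R_{\xi_2}x_1-\frac12d_*(e_1,e_2)_+)+(\xi_1\cdot_{A^*}\xi_2+\mathcal L_{x_1}\xi_2-R_{x_2}\xi_1-\frac12d(e_1,e_2)_+)$ for $e_i=x_i+\xi_i$; $\rho(x+\xi)=a_A(x)+a_{A^*}(\xi)$;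 $(x+\xi,y+\eta)_\pm=\langle\xi,y\rangle\pm\langle\eta,x\rangle$. A Dirac structure is a subbundle maximal isotropic for $(\cdot,\cdot)_-$ whose sections are closed under $\star$. For $H\in\Gamma(\mathrm{Sym}^2(A))$ (symmetric elements of $A\otimes A$), $\llbracket H,H\rrbracket\in\Gamma(\wedge^2A\otimes A)$ is $\llbracket H,H\rrbracket(\xi_1,\xi_2,\xi_3)=a_A(H^\sharp\xi_1)\langle H^\sharp\xi_2,\xi_3\rangle-a_A(H^\sharp\xi_2)\langle H^\sharp\xi_1,\xi_3\rangle+\langle\xi_1,H^\sharp\xi_2\cdot_AH^\sharp\xi_3\rangle-\langle\xi_2,H^\sharp\xi_1\cdot_AH^\sharp\xi_3\rangle-\langle\xi_3,[H^\sharp\xi_1,H^\sharp\xi_2]_A\rangle$. *)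

(* Defs.v *)
(* Algebraic (Serre--Swan) model of vector bundles:
   functions on M = a commutative K-algebra C (K a number field, e.g. R),
   Gamma(A) = VA, Gamma(A^* ) = VB : C-modules in perfect duality via
   pair : VA -> VB -> C,  pair x xi = <xi, x>. *)
From HB Require Import structures.
From mathcomp Require Import all_boot all_order all_algebra.
Set Implicit Arguments. Unset Strict Implicit. Unset Printing Implicit Defensive.
Import Order.TTheory GRing.Theory Num.Theory.
Local Open Scope ring_scope.

Section Defs.
Variables (K : numFieldType) (C : comAlgType K).

(* a vector field on M = an R-linear derivation of C^oo(M) *)
Definition is_derivation (D : C -> C) : Prop :=
  (forall (k : K) (f g : C), D (k *: f + g) = k *: D f + D g) /\
  (forall f g : C, D (f * g) = f * D g + g * D f).

Definition Clinear (U V : lmodType C) (phi : U -> V) : Prop :=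
  forall (c : C) (x y : U), phi (c *: x + y) = c *: phi x + phi y.

Definition Clinear_form (U : lmodType C) (phi : U -> C) : Prop :=
  forall (c : C) (x y : U), phi (c *: x + y) = c * phi x + phi y.

Variables (VA VB : lmodType C) (pair : VA -> VB -> C).

Definition perfect_pairing : Prop :=
  (((forall xi : VB, Clinear_form (fun x => pair x xi))) /\
     ((forall x : VA, Clinear_form (pair x))) /\
     ((forall x : VA, (forall xi, pair x xi = 0) -> x = 0)) /\
     ((forall xi : VB, (forall x, pair x xi = 0) -> xi = 0)) /\
     ((forall phi : VA -> C, Clinear_form phi ->
          exists xi : VB, forall x, phi x = pair x xi)) /\
     ((forall phi : VB -> C, Clinear_form phi ->
          exists x : VA, forall xi, phi xi = pair x xi))).

Definition left_symmetric_algebroid (V : lmodType C)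
    (mul : V -> V -> V) (anc : V -> C -> C) : Prop :=
  (((forall (k : K) (x y z : V),
         mul ((k%:A : C) *: x + y) z = (k%:A : C) *: mul x z + mul y z
      /\ mul z ((k%:A : C) *: x + y) = (k%:A : C) *: mul z x + mul z y)) /\
     ((forall x y z : V,
         mul x (mul y z) - mul (mul x y) z = mul y (mul x z) - mul (mul y x) z)) /\
     ((forall (f : C) (x y : V), mul x (f *: y) = f *: mul x y + anc x f *: y)) /\
     ((forall (f : C) (x y : V), mul (f *: x) y = f *: mul x y)) /\
     ((forall (f g : C) (x y : V), anc (f *: x + y) g = f * anc x g + anc y g)) /\
     ((forall x : V, is_derivation (anc x)))).

Definition brk (V : lmodType C) (mul : V -> V -> V) (x y : V) : V :=
  mul x y - mul y x.

End Defs.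

Section Bialg.
Variables (K : numFieldType) (C : comAlgType K) (VA VB : lmodType C)
  (pair : VA -> VB -> C)
  (mulA : VA -> VA -> VA) (aA : VA -> C -> C)
  (mulB : VB -> VB -> VB) (aB : VB -> C -> C)
  (LA : VA -> VB -> VB) (RA : VA -> VB -> VB) (dA : C -> VB)
  (LB : VB -> VA -> VA) (RB : VB -> VA -> VA) (dB : C -> VA).

(* characterisation of  L_x xi, R_x xi, d f, L_xi x, R_xi x, d_* f
   (unique by nondegeneracy of the pairing) *)
Definition dual_operators : Prop :=
  (((forall (x y : VA) (xi : VB),
         pair y (LA x xi) = aA x (pair y xi) - pair (brk mulA x y) xi)) /\
     ((forall (x y : VA) (xi : VB), pair y (RA x xi) = - pair (mulA y x) xi)) /\
     ((forall (f : C) (x : VA), pair x (dA f) = aA x f)) /\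
     ((forall (xi eta : VB) (x : VA),
         pair (LB xi x) eta = aB xi (pair x eta) - pair x (brk mulB xi eta))) /\
     ((forall (xi eta : VB) (x : VA), pair (RB xi x) eta = - pair x (mulB eta xi))) /\
     ((forall (f : C) (xi : VB), pair (dB f) xi = aB xi f))).

(* coboundaries of 1-cochains, as bilinear functions *)
Definition deltaA (eta : VB) (x1 x2 : VA) : C :=
  aA x1 (pair x2 eta) - pair (mulA x1 x2) eta.
Definition deltaB (y : VA) (xi1 xi2 : VB) : C :=
  aB xi1 (pair y xi2) - pair y (mulB xi1 xi2).

(* frak L_xi acting on T in Gamma(A^* (x) A^* ), T seen as a bilinear
   function on A x A:  (frak L_xi T)(x1,x2) =
   a_{A^*}(xi) T(x1,x2) - T(l_xi x1, x2) - T(x1, L_xi x2),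
   where l_xi = L_xi + R_xi is the dual of left multiplication xi .A^* _ *)
Definition frakLB (xi : VB) (T : VA -> VA -> C) (x1 x2 : VA) : C :=
  aB xi (T x1 x2) - T (LB xi x1 + RB xi x1) x2 - T x1 (LB xi x2).
Definition frakLA (x : VA) (T : VB -> VB -> C) (xi1 xi2 : VB) : C :=
  aA x (T xi1 xi2) - T (LA x xi1 + RA x xi1) xi2 - T xi1 (LA x xi2).

Definition left_symmetric_bialgebroid : Prop :=
  ((perfect_pairing pair) /\
     (left_symmetric_algebroid mulA aA) /\
     (left_symmetric_algebroid mulB aB) /\
     (dual_operators) /\
     ((forall (xi eta : VB) (x1 x2 : VA),
         deltaA (brk mulB xi eta) x1 x2
         = frakLB xi (deltaA eta) x1 x2 - frakLB eta (deltaA xi) x1 x2)) /\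
     ((forall (x y : VA) (xi1 xi2 : VB),
         deltaB (brk mulA x y) xi1 xi2
         = frakLA x (deltaB y) xi1 xi2 - frakLA y (deltaB x) xi1 xi2))).

Definition pairing_plus (e1 e2 : VA * VB) : C :=
  pair e2.1 e1.2 + pair e1.1 e2.2.
Definition pairing_minus (e1 e2 : VA * VB) : C :=
  pair e2.1 e1.2 - pair e1.1 e2.2.

Definition half : C := ((2 : K)^-1)%:A.

Definition star (e1 e2 : VA * VB) : VA * VB :=
  (mulA e1.1 e2.1 + LB e1.2 e2.1 - RB e2.2 e1.1 - half *: dB (pairing_plus e1 e2),
   mulB e1.2 e2.2 + LA e1.1 e2.2 - RA e2.1 e1.2 - half *: dA (pairing_plus e1 e2)).

(* Dirac structure: a subbundle (C-submodule) which is maximal isotropic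
   (Lagrangian: L = L^perp) for (.,.)_- and closed under star *)
Definition dirac_structure (L : VA * VB -> Prop) : Prop :=
  ((L (0, 0)) /\
     ((forall (c : C) e1 e2, L e1 -> L e2 -> L (c *: e1.1 + e2.1, c *: e1.2 + e2.2))) /\
     ((forall e1 e2, L e1 -> L e2 -> pairing_minus e1 e2 = 0)) /\
     ((forall e, (forall l, L l -> pairing_minus e l = 0) -> L e)) /\
     ((forall e1 e2, L e1 -> L e2 -> L (star e1 e2)))).

Definition graph (Hs : VB -> VA) (e : VA * VB) : Prop := e.1 = Hs e.2.

Definition Hform (Hs : VB -> VA) (xi eta : VB) : C := pair (Hs xi) eta.

Definition symmetric2 (Hs : VB -> VA) : Prop :=
  forall xi eta, Hform Hs xi eta = Hform Hs eta xi.

Definition deltaB2 (Hs : VB -> VA) (xi1 xi2 xi3 : VB) : C :=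
  aB xi1 (Hform Hs xi2 xi3) - aB xi2 (Hform Hs xi1 xi3)
  - Hform Hs xi2 (mulB xi1 xi3) + Hform Hs xi1 (mulB xi2 xi3)
  - Hform Hs (brk mulB xi1 xi2) xi3.

Definition dbracket (Hs : VB -> VA) (xi1 xi2 xi3 : VB) : C :=
  aA (Hs xi1) (pair (Hs xi2) xi3) - aA (Hs xi2) (pair (Hs xi1) xi3)
  + pair (mulA (Hs xi2) (Hs xi3)) xi1 - pair (mulA (Hs xi1) (Hs xi3)) xi2
  - pair (brk mulA (Hs xi1) (Hs xi2)) xi3.

End Bialg.

(* Main.v *)
Require Import Defs.
From HB Require Import structures.
From mathcomp Require Import all_boot all_order all_algebra.
From mathcomp Require Import ring.
Import Order.TTheory GRing.Theory Num.Theory.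
Local Open Scope ring_scope.

Lemma half2 (K : numFieldType) : (2^-1 : K) + 2^-1 = 1.
Proof. have h : (2:K) != 0 by rewrite pnatr_eq0. by field. Qed.

Lemma halfK (K : numFieldType) (C : comAlgType K) (g : C) :
  Defs.half C * (g + g) = g.
Proof.
by rewrite /Defs.half mulr_algl scalerDr -scalerDl half2 scale1r.
Qed.

Section Lin.
Variables (K : numFieldType) (C : comAlgType K) (V : lmodType C) (phi : V -> C).
Hypothesis hphi : Clinear_form phi.
Lemma lf0 : phi 0 = 0.
Proof.
have := hphi 1 0 0; rewrite scaler0 addr0 mul1r => /eqP.
by rewrite -subr_eq subrr eq_sym => /eqP.
Qed.
Lemma lfD x y : phi (x + y) = phi x + phi y.
Proof. by have := hphi 1 x y; rewrite scale1r mul1r. Qed.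
Lemma lfZ c x : phi (c *: x) = c * phi x.
Proof. by have := hphi c x 0; rewrite addr0 lf0 addr0. Qed.
Lemma lfN x : phi (- x) = - phi x.
Proof. by rewrite -scaleN1r lfZ mulN1r. Qed.
Lemma lfB x y : phi (x - y) = phi x - phi y.
Proof. by rewrite lfD lfN. Qed.
End Lin.

Section LinV.
Variables (K : numFieldType) (C : comAlgType K) (V W : lmodType C) (phi : V -> W).
Hypothesis hphi : Clinear phi.
Lemma l0 : phi 0 = 0.
Proof.
have := hphi 1 0 0; rewrite scaler0 addr0 scale1r => /eqP.
by rewrite -subr_eq subrr eq_sym => /eqP.
Qed.
Lemma lD x y : phi (x + y) = phi x + phi y.
Proof. by have := hphi 1 x y; rewrite !scale1r. Qed.
Lemma lZ c x : phi (c *: x) = c *: phi x.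
Proof. by have := hphi c x 0; rewrite !addr0 l0 addr0. Qed.
Lemma lN x : phi (- x) = - phi x.
Proof. by rewrite -scaleN1r lZ scaleN1r. Qed.
Lemma lB x y : phi (x - y) = phi x - phi y.
Proof. by rewrite lD lN. Qed.
End LinV.

Theorem mainTheorem15 (K : numFieldType) (C : comAlgType K) (VA VB : lmodType C)
  (pair : VA -> VB -> C)
  (mulA : VA -> VA -> VA) (aA : VA -> C -> C)
  (mulB : VB -> VB -> VB) (aB : VB -> C -> C)
  (LA : VA -> VB -> VB) (RA : VA -> VB -> VB) (dA : C -> VB)
  (LB : VB -> VA -> VA) (RB : VB -> VA -> VA) (dB : C -> VA)
  (Hbialg : left_symmetric_bialgebroid pair mulA aA mulB aB LA RA dA LB RB dB)
  (Hs : VB -> VA) (HsLin : Clinear Hs) :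
  dirac_structure pair mulA mulB LA RA dA LB RB dB (graph Hs) <->
  (symmetric2 pair Hs /\
   forall xi1 xi2 xi3 : VB,
     deltaB2 pair mulB aB Hs xi1 xi2 xi3 - dbracket pair mulA aA Hs xi1 xi2 xi3 = 0).
Proof.
case: Hbialg => [[plA [plB [ndA _]]] [[_ [_ [_ [_ [_ derA]]]]] [[_ [_ [_ [_ [_ derB]]]]] [[dLA [dRA [ddA [dLB [dRB ddB]]]]] _]]]].
have pDl x y z : pair (x + y) z = pair x z + pair y z by exact: (lfD _ _ _ _ (plA z)).
have pBl x y z : pair (x - y) z = pair x z - pair y z by exact: (lfB _ _ _ _ (plA z)).
have pZl c x z : pair (c *: x) z = c * pair x z by exact: (lfZ _ _ _ _ (plA z)).
have pNl x z : pair (- x) z = - pair x z by exact: (lfN _ _ _ _ (plA z)).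
have pNr x z : pair z (- x) = - pair z x by exact: (lfN _ _ _ _ (plB z)).
have pDr x y z : pair z (x + y) = pair z x + pair z y by exact: (lfD _ _ _ _ (plB z)).
have pBr x y z : pair z (x - y) = pair z x - pair z y by exact: (lfB _ _ _ _ (plB z)).
have pZr c x z : pair z (c *: x) = c * pair z x by exact: (lfZ _ _ _ _ (plB z)).
have HsD := lD _ _ _ _ _ HsLin; have HsB := lB _ _ _ _ _ HsLin; have Hs0 := l0 _ _ _ _ _ HsLin.
have dD (D : C -> C) f : is_derivation D -> D (f + f) = D f + D f.
  by case=> h _; have := h 1 f f; rewrite !scale1r.
have key : symmetric2 pair Hs -> forall xi eta zeta,
   pair (star pair mulA mulB LA RA dA LB RB dB (Hs xi, xi) (Hs eta, eta)).1 zeta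
   - pair (Hs (star pair mulA mulB LA RA dA LB RB dB (Hs xi, xi) (Hs eta, eta)).2) zeta
   = deltaB2 pair mulB aB Hs xi zeta eta - dbracket pair mulA aA Hs xi zeta eta.
  move=> Hsym xi eta zeta.
  have sy a b : pair (Hs a) b = pair (Hs b) a by exact: Hsym.
  rewrite sy /star /= /pairing_plus /=.
  rewrite !(pDl, pBl, pZl, pNl, pNr, pDr, pBr, pZr).
  rewrite dLB dRB ddB dLA dRA ddA.
  rewrite (sy eta xi) (dD _ _ (derB zeta)) (dD _ _ (derA (Hs zeta))) !halfK.
  rewrite /deltaB2 /dbracket /Hform /brk.
  rewrite !(pDl, pBl, pZl, pNl, pNr, pDr, pBr, pZr, HsB).
  rewrite (sy zeta eta) (sy zeta (mulB xi eta)) (sy eta (mulB zeta xi)) (sy eta (mulB xi zeta)).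
  ring.
split.
  case=> [H0 [Hlin [Hiso [Hmax Hstar]]]].
  have Hsym : symmetric2 pair Hs.
    move=> a b; have := Hiso (Hs b, b) (Hs a, a) erefl erefl.
    by rewrite /pairing_minus /= => /eqP; rewrite subr_eq0 => /eqP.
  split=> // x1 x2 x3; rewrite -(key Hsym x1 x3 x2).
  by have := Hstar (Hs x1, x1) (Hs x3, x3) erefl erefl; rewrite /graph => ->; rewrite subrr.
case=> Hsym HE.
have sy a b : pair (Hs a) b = pair (Hs b) a by exact: Hsym.
split; [|split; [|split; [|split]]].
- by rewrite /graph /= Hs0.
- by move=> c e1 e2; rewrite /graph => -> ->; rewrite HsLin.
- by move=> e1 e2; rewrite /graph /pairing_minus => -> ->; rewrite sy subrr.
- move=> e He; rewrite /graph; apply/eqP; rewrite -subr_eq0; apply/eqP.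
  apply: ndA => eta; rewrite pBl sy.
  have := He (Hs eta, eta) erefl; rewrite /pairing_minus /= => h.
  by rewrite -opprB h oppr0.
- case=> x1 a [x2 b]; rewrite /graph /= => -> ->.
  apply/eqP; rewrite -subr_eq0; apply/eqP; apply: ndA => z.
  by rewrite pBl key // HE.
Qed.
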